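(* Let $\mathcal{N}=(Q,\Sigma,\Delta,q_0,F)$ be a history-deterministic one-counter net. A strategy $\sigma$ of Eve in the letter game on $\mathcal{N}$ is winning for Eve if and only if every step $(p,k)\xrightarrow{a,d}(p',k')$ that $\sigma$ takes is a good transition.
   Context: A one-counter net (OCN) is $\mathcal{N}=(Q,\Sigma,\Delta,q_0,F)$ with $Q$ finite, $\Sigma$ finite, $q_0\in Q$, $F\subseteq Q$, $\Delta\subseteq Q\times\Sigma\times\{-1,0,1\}\times Q$; configurations $(q,n)\in Q\times\mathbb{N}$, step $(q,n)\xrightarrow{a,d}(p,n+d)$ if $(q,a,d,p)\in\Delta$ and $n+d\ge0$; runs start at $(q_0,0)$ and are accepting if the last state is in $F$; $\mathcal{L}(\mathcal{N})$ is the set of words with an accepting run. Letter game: positions $(c,w)$, start $((q_0,0),\varepsilon)$; each round Adam picks $a\in\Sigma$, Eve picks a step $c\xrightarrow{a,d}c'$; if Eve has none and $wa$ is a prefix of a word of $\mathcal{L}(\mathcal{N})$ she loses; if $wa\in\mathcal{L}(\mathcal{N})$ but the state of $c'$ is not in $F$, Adam wins; otherwise continue from $(c',wa)$; Eve wins infinite plays. $\mathcal{N}$ is history-deterministic if Eve wins the letter game. The game $G_1$ on $\mathcal{N}$ from a position $(c^E,c^A)$ (Eve's token, Adam's token): each round Adam picks $a\in\Sigma$; Eve picks a step $c^E\xrightarrow{a,d}c^E_{+}$; Adam picks a step $c^A\xrightarrow{a,d'}c^A_{+}$. If Adam cannot move his token, he loses. If Eve cannot move while Adam can move and extend his run to an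 accepting run, Eve loses. If both move and the state of $c^A_+$ is in $F$ but that of $c^E_+$ is not, Eve loses. Otherwise continue; Eve wins infinite plays. A transition $\delta=(p,a,d,p')\in\Delta$ is good at $(p,k)$ (equivalently, the step $(p,k)\xrightarrow{a,d}(p',k+d)$ is good) if Eve wins $G_1$ from $((p,k),(p,k))$ and choosing this step is a winning move for Eve there when Adam chooses the letter $a$. *)

(* Defs.v *)
From mathcomp Require Import all_boot all_order all_algebra.
Set Implicit Arguments. Unset Strict Implicit. Unset Printing Implicit Defensive.
Import Order.TTheory GRing.Theory Num.Theory.

Section OCN.
Variables (Q Sigma : finType).

Definition trans := (Q * Sigma * int * Q)%type.
Definition tsrc (t : trans) : Q := t.1.1.1.
Definition tlbl (t : trans) : Sigma := t.1.1.2.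
Definition tdir (t : trans) : int := t.1.2.
Definition ttgt (t : trans) : Q := t.2.

Record ocn := OCN {
  delta : seq trans;
  delta_dir : all (fun t => tdir t \in [:: (-1)%R; 0%R; 1%R]) delta;
  init : Q;
  final : {set Q}
}.

Definition config := (Q * nat)%type.

Variable N : ocn.

Definition fire (c : config) (t : trans) : option config :=
  if (t \in delta N) && (tsrc t == c.1) && (0 <= (Posz c.2) + tdir t)%R
  then Some (ttgt t, `|(Posz c.2 + tdir t)%R|%N) else None.

Fixpoint exec (c : config) (ts : seq trans) : option config :=
  match ts with
  | [::] => Some c
  | t :: ts' => match fire c t with Some c' => exec c' ts' | None => None end
  end.

Definition accepts_from (c : config) (w : seq Sigma) : Prop :=
  exists ts, map tlbl ts = w /\ exists c', exec c ts = Some c' /\ c'.1 \in final N.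

Definition lang (w : seq Sigma) : Prop := accepts_from (init N, 0%N) w.
Definition lprefix (w : seq Sigma) : Prop := exists v, lang (w ++ v).

Definition apply_move (o : option trans) (c : config) (a : Sigma) : option config :=
  match o with
  | Some t => if tlbl t == a then fire c t else None
  | None => None
  end.

(* An Eve strategy maps the word read so far and Adam's new letter to a
   transition (None = no move). Eve's configuration is determined by the word. *)
Definition lstrategy := seq Sigma -> Sigma -> option trans.

Fixpoint lrun (s : lstrategy) (h : seq Sigma) (c : config) (w : seq Sigma)
  : option config :=
  match w with
  | [::] => Some c
  | a :: w' => match apply_move (s h a) c a with
               | Some c' => lrun s (rcons h a) c' w'
               | None => None
               end
  end.

Definition lconf (s : lstrategy) (w : seq Sigma) := lrun s [::] (init N, 0%N) w.

(* position (c, w) is reached in a play consistent with s (the play has not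
   ended earlier by a win of Adam) *)
Definition lreach (s : lstrategy) (w : seq Sigma) (c : config) : Prop :=
  lconf s w = Some c /\
  forall n c', (0 < n)%N -> lconf s (take n w) = Some c' -> lang (take n w) ->
     c'.1 \in final N.

Definition llegal (s : lstrategy) : Prop :=
  forall w c a, lreach s w c ->
    (exists t, tlbl t = a /\ fire c t <> None) -> apply_move (s w a) c a <> None.

Definition lwinning (s : lstrategy) : Prop :=
  forall w c a, lreach s w c ->
    (apply_move (s w a) c a = None -> ~ lprefix (rcons w a)) /\
    (forall c', apply_move (s w a) c a = Some c' -> lang (rcons w a) ->
        c'.1 \in final N).

Definition history_deterministic : Prop :=
  exists s, llegal s /\ lwinning s.

(* History: sequence of (letter, Adam's transition); Eve's moves are
   determined by her strategy. *)
Definition g1strategy := seq (Sigma * trans) -> Sigma -> option trans.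

Fixpoint g1run (s : g1strategy) (h : seq (Sigma * trans)) (cE cA : config)
   (r : seq (Sigma * trans)) : option (config * config) :=
  match r with
  | [::] => Some (cE, cA)
  | (a, tA) :: r' =>
      match apply_move (s h a) cE a, apply_move (Some tA) cA a with
      | Some cE', Some cA' => g1run s (rcons h (a, tA)) cE' cA' r'
      | _, _ => None
      end
  end.

(* s is a winning strategy for Eve in G1 from position p0 = (Eve's token, Adam's token) *)
Definition g1winning (s : g1strategy) (p0 : config * config) : Prop :=
  forall h cE cA a, g1run s [::] p0.1 p0.2 h = Some (cE, cA) ->
    ((exists t, tlbl t = a /\ fire cE t <> None) -> apply_move (s h a) cE a <> None) /\
    (apply_move (s h a) cE a = None -> ~ (exists v, accepts_from cA (a :: v))) /\
    (forall cE' tA cA', apply_move (s h a) cE a = Some cE' -> tlbl tA = a ->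
        fire cA tA = Some cA' -> cA'.1 \in final N -> cE'.1 \in final N).

Definition good (t : trans) (k : nat) : Prop :=
  fire (tsrc t, k) t <> None /\
  exists s, g1winning s ((tsrc t, k), (tsrc t, k)) /\ s [::] (tlbl t) = Some t.

End OCN.

(* Main.v *)
Require Import Defs.
From mathcomp Require Import all_boot all_order all_algebra.
From Stdlib Require Import Classical.
Set Implicit Arguments. Unset Strict Implicit. Unset Printing Implicit Defensive.

Section Pf.
Variables (Q Sigma : finType) (N : ocn Q Sigma).
Local Notation tr := (trans Q Sigma).
Local Notation cfg := (config Q).

Lemma exec_cat (c : cfg) ts1 ts2 : exec N c (ts1 ++ ts2) =
  match exec N c ts1 with Some c' => exec N c' ts2 | None => None end.
Proof. elim: ts1 c => [|t ts IH] c //=. by case: (fire N c t). Qed.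

Lemma accepts_step (c : cfg) t c' v : fire N c t = Some c' ->
  accepts_from N c' v -> accepts_from N c (tlbl t :: v).
Proof.
move=> Hf [ts [Hl [cf [He Hfin]]]]; exists (t :: ts); split; first by rewrite /= Hl.
by exists cf; rewrite /= Hf.
Qed.

Lemma acc_nil (c : cfg) : c.1 \in final N -> accepts_from N c [::].
Proof. by move=> H; exists [::]; split => //; exists c. Qed.

Lemma lang_nil_final (c : cfg) : accepts_from N c [::] -> c.1 \in final N.
Proof. by move=> [[|t ts] [//= _ [c' [[<-] H]]]]. Qed.

Definition dead (c : cfg) := forall a v, ~ accepts_from N c (a :: v).

Lemma dead_step (c : cfg) t c' : dead c -> fire N c t = Some c' -> dead c'.
Proof. move=> Hd Hf a v Hacc; apply: (Hd (tlbl t) (a :: v)); exact: accepts_step Hf Hacc. Qed.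

Lemma apply_moveP o (c : cfg) a c' : apply_move N o c a = Some c' ->
  exists t, o = Some t /\ tlbl t = a /\ fire N c t = Some c'.
Proof. case: o => [t|] //=. case: eqP => // <- H. by exists t. Qed.

Lemma fire_src (c : cfg) t c' : fire N c t = Some c' -> tsrc t = c.1.
Proof. rewrite /fire; case: ifP => // /andP [/andP [_ /eqP H] _] _; exact: H. Qed.

Lemma g1run_cat (s : g1strategy Q Sigma) h cE cA r1 r2 :
  g1run N s h cE cA (r1 ++ r2) =
  match g1run N s h cE cA r1 with Some (x,y) => g1run N s (h ++ r1) x y r2 | None => None end.
Proof.
elim: r1 h cE cA => [|[a tA] r IH] h cE cA; first by rewrite /= cats0.
rewrite /=. case: (apply_move N (s h a) cE a) => [x|] //.
case: (if tlbl tA == a then fire N cA tA else None) => [y|] //.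
by rewrite IH cat_rcons.
Qed.

Lemma g1run_rcons_inv (g : g1strategy Q Sigma) h0 x y h a tA x' y' :
  g1run N g h0 x y (rcons h (a,tA)) = Some (x',y') ->
  exists x0 y0, g1run N g h0 x y h = Some (x0,y0) /\
    apply_move N (g (h0 ++ h) a) x0 a = Some x' /\ tlbl tA = a /\ fire N y0 tA = Some y'.
Proof.
rewrite -cats1 g1run_cat. case: (g1run N g h0 x y h) => [[x0 y0]|] //=.
case Hm: (apply_move N (g (h0 ++ h) a) x0 a) => [x1|] //.
case: eqP => // Hl. case Hf: (fire N y0 tA) => [y1|] //= [<- <-].
by exists x0, y0.
Qed.

Lemma g1run_rcons (g : g1strategy Q Sigma) h0 x y h a tA x0 y0 x' y' :
  g1run N g h0 x y h = Some (x0,y0) ->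
  apply_move N (g (h0 ++ h) a) x0 a = Some x' -> tlbl tA = a ->
  fire N y0 tA = Some y' -> g1run N g h0 x y (rcons h (a,tA)) = Some (x',y').
Proof. move=> Hh Hm Hl Hf. by rewrite -cats1 g1run_cat Hh /= Hm Hl eqxx Hf. Qed.

Lemma g1run_shift (g : g1strategy Q Sigma) r h0 x y h :
  g1run N (fun h => g (r ++ h)) h0 x y h = g1run N g (r ++ h0) x y h.
Proof.
elim: h h0 x y => [|[a tA] h IH] h0 x y //=.
case: (apply_move N (g (r ++ h0) a) x a) => [x'|] //.
case: (if tlbl tA == a then fire N y tA else None) => [y'|] //.
by rewrite IH rcons_cat.
Qed.

Definition wwin (g : g1strategy Q Sigma) (p0 : cfg * cfg) : Prop :=
 forall h cE cA a, g1run N g [::] p0.1 p0.2 h = Some (cE, cA) ->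
  (apply_move N (g h a) cE a = None -> ~ (exists v, accepts_from N cA (a :: v))) /\
  (forall cE' tA cA', apply_move N (g h a) cE a = Some cE' -> tlbl tA = a ->
      fire N cA tA = Some cA' -> cA'.1 \in final N -> cE'.1 \in final N).

Lemma win_wwin g p0 : g1winning N g p0 -> wwin g p0.
Proof. move=> H h cE cA a Hh; have [_ [H2 H3]] := H h cE cA a Hh; by split. Qed.

Lemma wwin_shift g p0 r x y : wwin g p0 -> g1run N g [::] p0.1 p0.2 r = Some (x,y) ->
  wwin (fun h => g (r ++ h)) (x,y).
Proof.
move=> W Hr h cE cA a /= Hh.
have: g1run N g [::] p0.1 p0.2 (r ++ h) = Some (cE,cA).
  by rewrite g1run_cat Hr /= -Hh g1run_shift cats0.
move=> H; exact: (W (r ++ h) cE cA a H).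
Qed.

Lemma dead_run (g : g1strategy Q Sigma) h0 x z h cE cA :
  g1run N g h0 x z h = Some (cE,cA) -> dead z -> dead cA.
Proof.
elim: h h0 x z => [|[a tA] h IH] h0 x z; first by move=> [_ <-].
rewrite /=. case: (apply_move N (g h0 a) x a) => [x'|] //.
case: eqP => // Hl. case Hf: (fire N z tA) => [z'|] // H Hd.
apply: (IH _ _ _ H); exact: dead_step Hd Hf.
Qed.

Lemma dead_conds (c : cfg) a : dead c ->
  (~ exists v, accepts_from N c (a :: v)) /\
  (forall tA c', tlbl tA = a -> fire N c tA = Some c' -> c'.1 \in final N -> False).
Proof.
move=> Hd; split; first by move=> [v Hv]; exact: Hd Hv.
move=> tA c' Hl Hf Hfin; apply: (Hd a [::]); rewrite -Hl; apply: accepts_step Hf _.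
exact: acc_nil.
Qed.

Lemma wwin_dead g x z : dead z -> wwin g (x,z).
Proof.
move=> Hd h cE cA a Hh; have HdA := dead_run Hh Hd.
have [D2 D3] := dead_conds a HdA.
split; first by move=> _.
move=> cE' tA cA' _ Hl Hf Hfin; exfalso; exact: D3 Hl Hf Hfin.
Qed.

Lemma wwin_acc g p0 : wwin g p0 -> forall v h cE cD a,
  g1run N g [::] p0.1 p0.2 h = Some (cE,cD) ->
  accepts_from N cD (a::v) -> accepts_from N cE (a::v).
Proof.
move=> W; elim => [|b v IH] h cE cD a Hh Hacc;
  have [H2 H3] := W h cE cD a Hh;
  (case Hm: (apply_move N (g h a) cE a) => [cE'|]; last by exfalso; apply: (H2 Hm); eexists; exact: Hacc);
  have [tE [_ [HlE HfE]]] := apply_moveP Hm;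
  rewrite -HlE; apply: (accepts_step HfE);
  move: Hacc => [[|tA ts'] [//= [Hla Hl'] [cf]]] /=;
  (case Hf: (fire N cD tA) => [cD'|] //; last by move=> [] ) => [[He Hfin]].
- case: ts' Hl' He => // _ [Hcf]; subst cf.
  apply: acc_nil; exact: (H3 cE' tA cD' Hm Hla Hf Hfin).
- apply: (IH (rcons h (a,tA)) cE' cD' b).
    exact: (g1run_rcons Hh Hm Hla Hf).
  by exists ts'; split => //; exists cf.
Qed.


Fixpoint mk (g2 : g1strategy Q Sigma) (acc h : seq (Sigma * tr)) : seq (Sigma * tr) :=
  match h with
  | [::] => [::]
  | x :: r => (x.1, odflt x.2 (g2 acc x.1)) :: mk g2 (rcons acc x) r
  end.

Lemma mk_rcons g2 acc h x : mk g2 acc (rcons h x) =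
  rcons (mk g2 acc h) (x.1, odflt x.2 (g2 (acc ++ h) x.1)).
Proof. elim: h acc => [|y h IH] acc /=; first by rewrite cats0. by rewrite IH cat_rcons. Qed.

Definition comp (g1 g2 : g1strategy Q Sigma) : g1strategy Q Sigma :=
  fun h a => g1 (mk g2 [::] h) a.

Lemma comp_inv g1 g2 x y z : wwin g2 (y,z) -> forall h cC cD,
  g1run N (comp g1 g2) [::] x z h = Some (cC,cD) ->
  (exists cE, g1run N g1 [::] x y (mk g2 [::] h) = Some (cC,cE) /\
              g1run N g2 [::] y z h = Some (cE,cD)) \/ dead cD.
Proof.
move=> W2; elim/last_ind => [|h [a tA] IH] cC cD.
  by move=> [<- <-]; left; exists y.
move/g1run_rcons_inv => [cC0 [cD0 [Hh [HmC [HlA HfA]]]]].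
case: (IH cC0 cD0 Hh) => [[cE [Hg1 Hg2]]|Hd]; last by right; exact: dead_step Hd HfA.
case: (classic (dead cD)) => Hd; first by right.
have [b [v Hacc]] : exists b v, accepts_from N cD (b::v).
  apply: NNPP => Hn; apply: Hd => b v Hv; apply: Hn; by exists b, v.
have Hacc' : accepts_from N cD0 (a :: b :: v) by rewrite -HlA; exact: accepts_step HfA Hacc.
have [H2 _] := W2 h cE cD0 a Hg2.
case Hm2: (apply_move N (g2 h a) cE a) => [cE'|]; last first.
  by exfalso; apply: (H2 Hm2); exists (b :: v).
have [tE [Hg2t [HlE HfE]]] := apply_moveP Hm2.
left; exists cE'; split.
  rewrite mk_rcons /= Hg2t /=. exact: (g1run_rcons Hg1 HmC HlE HfE).
exact: (g1run_rcons Hg2 Hm2 HlA HfA).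
Qed.

Lemma wwin_trans g1 g2 x y z : wwin g1 (x,y) -> wwin g2 (y,z) -> wwin (comp g1 g2) (x,z).
Proof.
move=> W1 W2 h cC cD a Hh.
case: (comp_inv W2 Hh) => [[cE [Hg1 Hg2]]|Hd].
  have [H12 H13] := W1 (mk g2 [::] h) cC cE a Hg1.
  have [H22 H23] := W2 h cE cD a Hg2.
  split.
    move=> Hn [v Hv]; apply: (H12 Hn); exists v; exact: (wwin_acc W2 Hg2 Hv).
  move=> cC' tA cD' Hm Hl Hf Hfin.
  case Hm2: (apply_move N (g2 h a) cE a) => [cE'|]; last first.
    exfalso; apply: (H22 Hm2); exists [::]; rewrite -Hl; apply: accepts_step Hf _.
    exact: acc_nil.
  have HfinE := H23 cE' tA cD' Hm2 Hl Hf Hfin.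
  have [tE [_ [HlE HfE]]] := apply_moveP Hm2.
  exact: (H13 cC' tE cE' Hm HlE HfE HfinE).
have [D2 D3] := dead_conds a Hd.
split; first by move=> _.
move=> cE' tA cA' _ Hl Hf Hfin; exfalso; exact: D3 Hl Hf Hfin.
Qed.

Lemma lrun_cat (s : lstrategy Q Sigma) h c w1 w2 : lrun N s h c (w1 ++ w2) =
  match lrun N s h c w1 with Some c' => lrun N s (h ++ w1) c' w2 | None => None end.
Proof.
elim: w1 h c => [|a w IH] h c /=; first by rewrite cats0.
case: (apply_move N (s h a) c a) => [c'|] //. by rewrite IH cat_rcons.
Qed.

Lemma lconf_rcons s w a : lconf N s (rcons w a) =
  match lconf N s w with Some c => apply_move N (s w a) c a | None => None end.
Proof.
rewrite /lconf -cats1 lrun_cat. case: (lrun N s [::] (init N, 0%N) w) => [c|] //=.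
by case: (apply_move N (s w a) c a).
Qed.

Lemma lrun_run (s : lstrategy Q Sigma) h c w c' : lrun N s h c w = Some c' ->
  exists ts, map (@tlbl Q Sigma) ts = w /\ exec N c ts = Some c'.
Proof.
elim: w h c => [|a w IH] h c /=; first by move=> [<-]; exists [::].
case Hm: (apply_move N (s h a) c a) => [c1|] // /IH [ts [Hl He]].
have [t [_ [Hla Hf]]] := apply_moveP Hm.
by exists (t::ts); rewrite /= Hla Hl Hf.
Qed.

Lemma lreach_rcons s w c a c' : lwinning N s -> lreach N s w c ->
  apply_move N (s w a) c a = Some c' -> lreach N s (rcons w a) c'.
Proof.
move=> Win Hr Hm; have [Hc Hfin] := Hr.
split; first by rewrite lconf_rcons Hc.
move=> n c1 Hn. case: (leqP n (size w)) => Hnw.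
  rewrite -cats1 takel_cat //. exact: Hfin.
rewrite take_oversize ?size_rcons //.
rewrite lconf_rcons Hc Hm => [[<-]] Hl.
exact: (proj2 (Win w c a Hr) c' Hm Hl).
Qed.

Lemma lreach_prefix s w a c' : lreach N s (rcons w a) c' ->
  exists c, lreach N s w c /\ apply_move N (s w a) c a = Some c'.
Proof.
move=> [Hc Hfin]. move: Hc; rewrite lconf_rcons.
case Hw: (lconf N s w) => [c|] // Hm. exists c; split => //. split => //.
move=> n c1 Hn. case: (leqP n (size w)) => Hnw.
  move=> Hc1 Hl. apply: (Hfin n c1 Hn); rewrite -cats1 takel_cat //.
rewrite take_oversize; last exact: ltnW.
move=> Hc1 Hl. case: (posnP (size w)) => Hs.
  move: Hs Hc1 Hl => /size0nil -> [<-]. exact: lang_nil_final.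
apply: (Hfin (size w) c1 Hs); rewrite -cats1 takel_cat // take_size //.
Qed.

Lemma LG s w c c0 ts0 : llegal N s -> lwinning N s -> lreach N s w c ->
  map (@tlbl Q Sigma) ts0 = w -> exec N (init N, 0%N) ts0 = Some c0 ->
  g1winning N (fun h a => s (w ++ map fst h) a) (c, c0).
Proof.
move=> Leg Win Hr0 Hts0 He0.
have Inv : forall h cE cA, g1run N (fun h a => s (w ++ map fst h) a) [::] c c0 h = Some (cE,cA) ->
  lreach N s (w ++ map fst h) cE /\
  exists ts, map (@tlbl Q Sigma) ts = w ++ map fst h /\ exec N (init N, 0%N) ts = Some cA.
  elim/last_ind => [|h [a tA] IH] cE cA.
    by move=> [<- <-]; rewrite cats0; split => //; exists ts0.
  move/g1run_rcons_inv => [x0 [y0 [Hh [Hm [Hl Hf]]]]].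
  have [Hr [ts [Hts He]]] := IH _ _ Hh.
  split.
    rewrite map_rcons -rcons_cat. exact: (lreach_rcons Win Hr Hm).
  exists (rcons ts tA); rewrite !map_rcons Hts Hl rcons_cat; split => //.
  by rewrite -cats1 exec_cat He /= Hf.
move=> h cE cA a /Inv [Hr [ts [Hts He]]].
split; [|split].
- move=> Hex. exact: (Leg _ _ _ Hr Hex).
- move=> Hn [v [ts2 [Hl2 [cf [He2 Hfin]]]]]. have [H2 _] := Win _ _ a Hr.
  apply: (H2 Hn). exists v; exists (ts ++ ts2); split.
    by rewrite map_cat Hts Hl2 cat_rcons.
  by exists cf; rewrite exec_cat He.
- move=> cE' tA cA' Hm Hl Hf Hfin. have [_ H3] := Win _ _ a Hr.
  apply: (H3 cE' Hm). exists (rcons ts tA); split; first by rewrite map_rcons Hts Hl.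
  by exists cA'; rewrite -cats1 exec_cat He /= Hf.
Qed.

End Pf.

Theorem lemma5 (Q Sigma : finType) (N : ocn Q Sigma) :
  history_deterministic N ->
  forall s : lstrategy Q Sigma, llegal N s ->
    (lwinning N s <->
     (forall w c a t c', lreach N s w c -> s w a = Some t -> tlbl t = a ->
        fire N c t = Some c' -> good N t c.2)).
Proof.
move=> [sig [Lsig Wsig]] s Leg; split.
  move=> Win w [q k] a t c' Hr Hs Hl Hf.
  have Hsrc := fire_src Hf. rewrite /= in Hsrc.
  have [ts [Hts He]] := lrun_run (proj1 Hr).
  split; first by rewrite Hsrc /= Hf.
  exists (fun h b => s (w ++ map fst h) b); split.
    rewrite Hsrc /=; exact: (LG Leg Win Hr Hts He).
  by rewrite /= cats0 Hl Hs.
move=> Good.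
have Inv : forall w c, lreach N s w c -> forall ts d, map (@tlbl Q Sigma) ts = w ->
    exec N (init N, 0%N) ts = Some d -> exists g, wwin N g (c,d).
  elim/last_ind => [|w a IH].
    move=> c [Hc _] [|//] d _ [<-]. move: Hc => [<-].
    exists (fun h b => sig ([::] ++ map fst h) b). apply: win_wwin.
    apply: (LG (ts0 := [::]) Lsig Wsig) => //.
    split => // n c1 _ /= [<-]; exact: lang_nil_final.
  move=> c' Hr ts d' Hts He.
  have [[q k] [Hrc Hm]] := lreach_prefix Hr.
  have [t [Hst [Hl Hf]]] := apply_moveP Hm.
  have [_ [gt [Wt Hgt]]] := Good w (q,k) a t c' Hrc Hst Hl Hf.
  have Hsrc := fire_src Hf. rewrite /= in Hsrc. rewrite Hsrc in Wt.
  move: Hts He; case/lastP: ts => [|ts0 tA]; first by move=> /(congr1 size); rewrite size_rcons.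
  rewrite map_rcons => /rcons_inj [Hts0 HlA].
  rewrite -cats1 exec_cat. case He0: (exec N _ ts0) => [d|] //=.
  case HfA: (fire N d tA) => [d'0|] // [<-].
  have [g Wg] := IH _ Hrc ts0 d Hts0 He0.
  case: (classic (dead N d'0)) => Hd; first by exists g; exact: wwin_dead.
  have [b [v Hacc]] : exists b v, accepts_from N d'0 (b::v).
    apply: NNPP => Hn; apply: Hd => b v Hv; apply: Hn; by exists b, v.
  have Hacc' : accepts_from N d (a :: b :: v) by rewrite -HlA; exact: accepts_step HfA Hacc.
  have [H2 _] := Wg [::] (q,k) d a erefl.
  case Hme: (apply_move N (g [::] a) (q,k) a) => [e|]; last first.
    by exfalso; apply: (H2 Hme); exists (b::v).
  have [tE [HgE [HlE HfE]]] := apply_moveP Hme.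
  have Wg' : wwin N (fun h => g ([:: (a,tA)] ++ h)) (e, d'0).
    apply: (wwin_shift Wg). exact: (g1run_rcons (h := [::]) erefl Hme HlA HfA).
  have Wt' : wwin N (fun h => gt ([:: (a,tE)] ++ h)) (c', e).
    apply: (wwin_shift (win_wwin Wt)). apply: (g1run_rcons (h := [::]) erefl _ HlE HfE).
    rewrite Hst in Hm. rewrite Hl in Hgt. by rewrite /= Hgt.
  by eexists; exact: (wwin_trans Wt' Wg').
move=> w c a Hr. split.
  move=> Hn [v [ts [Hts [cf [He Hfin]]]]].
  rewrite cat_rcons in Hts.
  have Hts1 : map (@tlbl Q Sigma) (take (size w) ts) = w by rewrite map_take Hts take_size_cat.
  have Hts2 : map (@tlbl Q Sigma) (drop (size w) ts) = a :: v by rewrite map_drop Hts drop_size_cat.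
  move: He; rewrite -(cat_take_drop (size w) ts) exec_cat.
  case He1: (exec N _ (take (size w) ts)) => [d|] // He2.
  have [g Wg] := Inv w c Hr _ d Hts1 He1.
  have [H2 _] := Wg [::] c d a erefl.
  case Hme: (apply_move N (g [::] a) c a) => [e|]; last first.
    by apply: (H2 Hme); exists v; exists (drop (size w) ts); split => //; exists cf.
  have [tE [_ [HlE HfE]]] := apply_moveP Hme.
  apply: (Leg w c a Hr _ Hn). by exists tE; split => //; rewrite HfE.
move=> c' Hm [ts [Hts [cf [He Hfin]]]].
have [t [Hst [Hl Hf]]] := apply_moveP Hm.
move: Hts He; case/lastP: ts => [|ts0 tA]; first by move=> /(congr1 size); rewrite size_rcons.
rewrite map_rcons => /rcons_inj [Hts0 HlA].
rewrite -cats1 exec_cat. case He0: (exec N _ ts0) => [d|] //=.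
case HfA: (fire N d tA) => [d'|] // [Hcf]; subst cf.
have [g Wg] := Inv w c Hr ts0 d Hts0 He0.
have [H2 H3] := Wg [::] c d a erefl.
case Hme: (apply_move N (g [::] a) c a) => [e|]; last first.
  exfalso; apply: (H2 Hme); exists [::]; rewrite -HlA; apply: accepts_step HfA _.
  exact: acc_nil.
have Hefin := H3 e tA d' Hme HlA HfA Hfin.
have [tE [_ [HlE HfE]]] := apply_moveP Hme.
move: c Hr Hm Hf Hst Hme HfE {Wg H2 H3} => [q k] Hr Hm Hf Hst Hme HfE.
have [_ [gt [Wt Hgt]]] := Good w (q,k) a t c' Hr Hst Hl Hf.
have Hsrc := fire_src Hf. rewrite /= in Hsrc. rewrite Hsrc in Wt.
have [_ [_ H3t]] := Wt [::] (q,k) (q,k) a erefl.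
apply: (H3t c' tE e _ HlE HfE Hefin).
rewrite Hst in Hm. rewrite Hl in Hgt. by rewrite Hgt.
Qed.
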